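(* Let $G=(V,E)$ be a connected undirected graph with $n=|V|$ nodes, let $\beta$ be a finite set (batch) of new edges on $V$, and let $G'=(V,E\cup\beta)$. For nodes $s\neq t$, let $d_s(t)$, $\sigma_{st}$ and $\mathcal{S}_{st}$ denote the distance, the number of shortest paths and the set of shortest paths from $s$ to $t$ in $G$, and let $d'_s(t)$, $\sigma'_{st}$, $\mathcal{S}'_{st}$ denote the same quantities in $G'$. Let $S=\{p_{(1)},\dots,p_{(r)}\}$ be a set of $r$ shortest paths of $G$ sampled according to $\pi_G$, i.e. for each $k=1,\dots,r$ and each shortest path $p_{st}$ of $G$ between distinct nodes $s,t$, $\Pr(p_{(k)}=p_{st})=\pi_G(p_{st})=\frac{1}{n(n-1)}\cdot\frac{1}{\sigma_{st}}$ (equivalently: an ordered pair $(s,t)$ of distinct nodes is chosen uniformly at random and then a path is chosen uniformly at random from $\mathcal{S}_{st}$). Let $\mathcal{P}$ be the procedure that builds $S'=\{p'_{(1)},\dots,p'_{(r)}\}$ by replacing each sampled path $p_{(k)}=p_{st}\in S$ (with endpoints $s,t$) by a path $p'_{st}$ according to the rules: (1) $p'_{st}=p_{st}$ if $d'_s(t)=d_s(t)$ and $\sigma'_{st}=\sigma_{st}$; (2) otherwise, $p'_{st}$ is selected uniformly at random among $\mathcal{S}'_{st}$. Then each $p'_{st}$ is a shortest path of $G'$, and for every shortest path $p'_{xy}$ of $G'$ between distinct nodes $x,y$ and every $k=1,\dots,r$, \[\Pr(p'_{(k)}=p'_{xy})=\frac{1}{n(n-1)}\cdot\frac{1}{\s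igma'_{xy}}.\]
   Context: Shortest paths, distances and path counts are taken in the (undirected) graphs $G$ and $G'$; $G'$ is obtained from $G$ by inserting the edges of the batch $\beta$ (edge insertions only). *)

(* Defs.v *)
From mathcomp Require Import all_boot all_order all_algebra.
From mathcomp Require Import boolp.
Set Implicit Arguments. Unset Strict Implicit. Unset Printing Implicit Defensive.
Import Order.TTheory GRing.Theory Num.Theory.

Section ShortestPaths.
Variable V : finType.

(* A path is represented by its full vertex list [s; v1; ...; t]. *)
(* [walk e s t q] : q is a walk in the graph with edge relation e from s to t;
   its length (number of edges) is (size q).-1. *)
Definition walk (e : rel V) (s t : V) (q : seq V) : bool :=
  if q is x :: p then [&& x == s, path e x p & last x p == t] else false.

Definition shortest (e : rel V) (s t : V) (q : seq V) : Prop :=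
  walk e s t q /\ forall q', walk e s t q' -> size q <= size q'.

(* A finite list of all duplicate-free vertex sequences; every shortest path is
   duplicate-free, so it is a finite superset of every set of shortest paths. *)
Definition cand : seq (seq V) :=
  undup (flatten [seq permutations (enum A) | A : {set V}]).

Definition SP (e : rel V) (s t : V) : seq (seq V) :=
  undup [seq q <- cand | `[< shortest e s t q >] ].

Definition sigma (e : rel V) (s t : V) : nat := size (SP e s t).

(* d_s(t) : length of a shortest path from s to t (0 if none exists). *)
Definition dist (e : rel V) (s t : V) : nat := (size (head [::] (SP e s t))).-1.

(* Edge relation of G' = (V, E \cup beta) (beta read as undirected edges). *)
Definition addE (e beta : rel V) : rel V := fun x y => [|| e x y, beta x y | beta y x].

Variable R : realFieldType.
Local Open Scope ring_scope.

Definition piG (e : rel V) (q : seq V) : R :=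
  if q is s :: p then
    let t := last s p in
    if (s != t) && `[< shortest e s t q >]
    then ((#|V| * #|V|.-1)%:R)^-1 * ((sigma e s t)%:R)^-1 else 0
  else 0.

(* Transition kernel of the procedure P: probability that the sampled path q
   (with endpoints s,t) is replaced by q', where e' is the edge relation of G'. *)
Definition Pker (e e' : rel V) (q q' : seq V) : R :=
  if q is s :: p then
    let t := last s p in
    if (dist e' s t == dist e s t) && (sigma e' s t == sigma e s t)
    then (q' == q)%:R
    else if q' \in SP e' s t then ((sigma e' s t)%:R)^-1 else 0
  else 0.

End ShortestPaths.

(* Main.v *)
Require Import Defs.
From mathcomp Require Import all_boot all_order all_algebra.
From mathcomp Require Import boolp.
Import Order.TTheory GRing.Theory Num.Theory.
Set Implicit Arguments. Unset Strict Implicit.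
Section Gen.
Variable V : finType.

Lemma uniq_in_cand (q : seq V) : uniq q -> q \in cand V.
Proof.
move=> uq; rewrite /cand mem_undup; apply/flattenP.
exists (permutations (enum [set x in q])); first by apply: (codom_f (fun A : {set V} => permutations (enum A))).

rewrite mem_permutations; apply: uniq_perm => //; first exact: enum_uniq.
by move=> x; rewrite mem_enum inE.
Qed.

Lemma shortest_uniq (e : rel V) s t q : shortest e s t q -> uniq q.
Proof.
case: q => [[]//|x p [/and3P[/eqP xs pp /eqP lt] mn]].
move: lt; case: (shortenP pp) => p' pp' u' sub' lt.
apply: (leq_size_uniq u').
  move=> y; rewrite !inE => /orP[->//|/sub' ->]; by rewrite orbT.
apply: mn; by rewrite /walk pp' lt xs !eqxx.
Qed.

Lemma mem_SP (e : rel V) s t q : (q \in SP e s t) = `[< shortest e s t q >].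
Proof.
rewrite /SP mem_undup mem_filter andbC.
case: (boolP `[< _ >]) => [/asboolP H|_]; last by rewrite andbF. by rewrite uniq_in_cand // (shortest_uniq H).
Qed.

Lemma SP_uniq (e : rel V) s t : uniq (SP e s t).
Proof. exact: undup_uniq. Qed.

Lemma shortest_size (e : rel V) s t q q' :
  shortest e s t q -> shortest e s t q' -> size q = size q'.
Proof.
by move=> [w m] [w' m']; apply/eqP; rewrite eqn_leq m // m'.
Qed.

Lemma exists_shortest (e : rel V) s t : connect e s t -> exists q, shortest e s t q.
Proof.
move=> /connectP[p pp lt].
pose P := fun n => `[< exists q, walk e s t q /\ size q = n >].
have exP : exists n, P n.
  exists (size (s :: p)); apply/asboolP; exists (s :: p); split => //.
  by rewrite /walk eqxx pp -lt eqxx.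
case: (ex_minnP exP) => n /asboolP [q [wq sq]] mn.
exists q; split => // q' wq'; rewrite sq; apply: mn; apply/asboolP; by exists q'.
Qed.

Lemma dist_eq (e : rel V) s t q : shortest e s t q -> dist e s t = (size q).-1.
Proof.
move=> H; rewrite /dist.
have: q \in SP e s t by rewrite mem_SP; apply/asboolP.
case E: (SP e s t) => [//|h r] _ /=.
have: h \in SP e s t by rewrite E mem_head.
by rewrite mem_SP => /asboolP H'; rewrite (shortest_size H' H).
Qed.

Lemma sigma_gt0 (e : rel V) s t q : shortest e s t q -> (0 < sigma e s t)%N.
Proof.
move=> H; rewrite /sigma; have: q \in SP e s t by rewrite mem_SP; apply/asboolP.
by case: (SP e s t).
Qed.

Lemma walk_size (e : rel V) s t q : walk e s t q -> (0 < size q)%N.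
Proof. by case: q. Qed.

Lemma walk_sub (e e' : rel V) s t q : subrel e e' -> walk e s t q -> walk e' s t q.
Proof.
move=> sub; case: q => // x p /and3P[a b c]; by rewrite /walk a (sub_path sub b) c.
Qed.

Lemma SP_sub (e e' : rel V) s t q : subrel e e' -> connect e' s t ->
  dist e' s t = dist e s t -> shortest e s t q -> shortest e' s t q.
Proof.
move=> sub c dd H; have [q0 H0] := exists_shortest c.
split; first exact: (walk_sub sub H.1).
move=> q' w'; apply: leq_trans (H0.2 _ w').
have := dist_eq H; have := dist_eq H0; rewrite dd => -> .
have := walk_size H.1; have := walk_size H0.1.
case: (size q) => // a; case: (size q0) => // b _ _ /= ->; done.
Qed.

End Gen.
Unset Implicit Arguments. Set Strict Implicit.
Local Open Scope ring_scope.
Set Implicit Arguments. Unset Strict Implicit.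
Lemma walk_ends (V : finType) (e1 e2 : rel V) s t x y q :
  walk e1 s t q -> walk e2 x y q -> s = x /\ t = y.
Proof.
case: q => // a r /and3P[/eqP <- _ /eqP <-] /and3P[/eqP <- _ /eqP <-]; done.
Qed.

Lemma sum_const_seq (R : realFieldType) (T : Type) (s : seq T) (c : R) :
  \sum_(p <- s) c = c *+ size s.
Proof. elim: s => [|a s IH]; by rewrite ?big_nil ?big_cons ?IH ?mulrS. Qed.

Unset Implicit Arguments.
Theorem lemma2 (R : realFieldType) (V : finType) (e beta : rel V)
  (e_sym : symmetric e) (e_irr : irreflexive e)
  (e_conn : forall s t : V, connect e s t) :
  (* every replacement path p'_st is a shortest path of G' *)
  (forall (s t : V) (p p' : seq V), s != t -> shortest e s t p ->
     0 < Pker R e (addE e beta) p p' -> shortest (addE e beta) s t p') /\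
  (* Pr(p'_(k) = p'_xy) = 1/(n(n-1)) * 1/sigma'_xy *)
  (forall (x y : V) (p' : seq V), x != y -> shortest (addE e beta) x y p' ->
     \sum_(p <- cand V) piG R e p * Pker R e (addE e beta) p p'
       = ((#|V| * #|V|.-1)%:R)^-1 * ((sigma (addE e beta) x y)%:R)^-1).
Proof.
set e' := addE e beta.
have sub : subrel e e' by move=> a b h; rewrite /e' /addE h.
have conn' : forall s t, connect e' s t.
  move=> s t; apply: (connect_sub _ (e_conn s t)) => a b h; exact: connect1 (sub _ _ h).
split.
  move=> s t p p' st Hp.
  case: p Hp => [[]//|a r] Hp.
  have/and3P[/eqP xs _ /eqP lt] := Hp.1; subst a.
  rewrite /Pker /= lt.
  case: ifP => [/andP[/eqP dd _]|_].
    rewrite ltr0n lt0b => /eqP ->; exact: (SP_sub sub (conn' s t) dd Hp).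
  case: ifP => [H _|_]; last by rewrite ltxx.
  by rewrite mem_SP in H; apply/asboolP.
move=> x y p' xy Hp'.
set k := ((#|V| * #|V|.-1)%:R)^-1 : R.
set C := (dist e' x y == dist e x y) && (sigma e' x y == sigma e x y).
set g := fun p : seq V => if C then (p == p')%:R * (k * ((sigma e x y)%:R)^-1)
   else k * ((sigma e x y)%:R)^-1 * ((sigma e' x y)%:R)^-1.
have F : forall p, piG R e p * Pker R e e' p p' = if p \in SP e x y then g p else 0.
  case => [|s r].
    have -> : ([::] \in SP e x y) = false.
      by rewrite mem_SP; apply/asboolP; case; case.
    by rewrite /piG mul0r.
  case: (boolP (s :: r \in SP e x y)) => Hin.
    have Hs := Hin; rewrite mem_SP in Hs; move/asboolP: Hs => Hs.
    have/and3P[/eqP xs _ /eqP lt] := Hs.1; subst s.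
    rewrite /piG /Pker /= lt xy /=.
    have -> : `[< shortest e x y (x :: r) >] by apply/asboolP.
    rewrite -/C /g; case: ifP => _.
      by rewrite eq_sym mulrC.
    have -> : p' \in SP e' x y by rewrite mem_SP; apply/asboolP.
    by [].
  rewrite /piG /=.
  case: ifP => [/andP[st /asboolP Hs]|_]; last by rewrite mul0r.
  rewrite /Pker /=.
  case: ifP => _.
    case: eqP => [E|_]; last by rewrite mulr0.
    exfalso; move/negP: Hin; apply; rewrite mem_SP; apply/asboolP.
    rewrite -E in Hs *; have [-> ->] := walk_ends Hp'.1 Hs.1; done.
  case: ifP => [H|_]; last by rewrite mulr0.
  rewrite mem_SP in H; move/asboolP: H => H.
  have [xs yt] := walk_ends Hp'.1 H.1.
  by exfalso; move/negP: Hin; apply; rewrite mem_SP; apply/asboolP; rewrite xs yt.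
rewrite (eq_bigr _ (fun p _ => F p)) -big_mkcond -big_filter.
have -> : [seq p <- cand V | p \in SP e x y] = SP e x y.
  rewrite {2}/SP undup_id; last by rewrite filter_uniq // undup_uniq.
  by apply: eq_filter => q; rewrite mem_SP.
have [q0 Hq0] := exists_shortest (e_conn x y).
have s0 : (sigma e x y)%:R != 0 :> R by rewrite pnatr_eq0 -lt0n (sigma_gt0 Hq0).
rewrite /g; case HC: C.
  have/andP[/eqP dd /eqP ss] := HC.
  have inSP : p' \in SP e x y.
    have subS : {subset SP e x y <= SP e' x y}.
      move=> q; rewrite !mem_SP => /asboolP Hq; apply/asboolP.
      exact: (SP_sub sub (conn' x y) dd Hq).
    have := uniq_min_size (SP_uniq e x y) subS (eq_leq ss).
    case=> _ eqS.
    by rewrite eqS mem_SP; apply/asboolP.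
  rewrite (bigD1_seq p') //= ?SP_uniq // eqxx mul1r big1 ?addr0 ?ss //.
  by move=> p /negPf ->; rewrite mul0r.
rewrite sum_const_seq.
by rewrite -[_ *+ _]mulr_natr mulrAC -/(sigma e x y) -(mulrA k) mulVf // mulr1.
Qed.
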